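(* Let $q>0$, $k>0$, $D>0$, and let $\bar U=(\bar u,\bar z,\bar y):\mathbb{R}\to\mathbb{R}^3$ be a $C^1$ solution of the traveling-wave system \[ u'=\Big(\tfrac12 u^2-\tfrac12 u_-^2\Big)-(u-u_-)-q(z+Dy),\qquad z'=y,\qquad y'=D^{-1}\big(-y+k\varphi(u)z\big), \] (where $'=\mathrm{d}/\mathrm{d}\xi$) satisfying $\bar z(\xi)\ge 0$ for all $\xi$ and \[ \lim_{\xi\to-\infty}\bar U(\xi)=(u_-,0,0),\qquad \lim_{\xi\to+\infty}\bar U(\xi)=(u_+,1,0), \] where $u_\pm$ satisfy the Rankine–Hugoniot relation $\tfrac12(u_+^2-u_-^2)=u_+-u_-+q$, $u_+<u_{\mathrm{ig}}<u_-$, and the weak-detonation condition $u_+,u_-<1$. Then $\bar u(\xi)\le u_-$ for all $\xi\in\mathbb{R}$, and $\bar u$ is a decreasing (non-increasing) function of $\xi$ on $\mathbb{R}$.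
   Context: This is the rescaled Majda model $u_t-u_x+(u^2/2)_x=u_{xx}+qk\varphi(u)z$, $z_t-z_x=Dz_{xx}-k\varphi(u)z$ (wave speed normalized to $s=1$, viscosity to $1$, flux $f(u)=u^2/2$), whose traveling waves $(\bar u,\bar z)(x-t)$ with $\bar y=\bar z'$ satisfy the displayed ODE system. The ignition function is $\varphi(u)=0$ for $u\le u_{\mathrm{ig}}$ and $\varphi(u)=e^{-E_A/(u-u_{\mathrm{ig}})}$ for $u>u_{\mathrm{ig}}$, with activation energy $E_A>0$ and fixed ignition threshold $u_{\mathrm{ig}}$. A weak detonation is such a connection with $f'(u_\pm)=u_\pm<s=1$. *)

(* Defs.v *)
From Stdlib Require Import Reals.
Open Scope R_scope.

Definition phi (EA uig u : R) : R :=
  if Rle_dec u uig then 0 else exp (- EA / (u - uig)).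

Definition lim_pinf (f : R -> R) (l : R) : Prop :=
  forall eps : R, 0 < eps -> exists M : R, forall x : R, M <= x -> Rabs (f x - l) < eps.

Definition lim_minf (f : R -> R) (l : R) : Prop :=
  forall eps : R, 0 < eps -> exists M : R, forall x : R, x <= M -> Rabs (f x - l) < eps.

(* Main.v *)
Require Import Defs.
From Stdlib Require Import Reals Lra Psatz Classical.
Open Scope R_scope.

Lemma cont_of_der f x l : derivable_pt_lim f x l -> forall eps, 0 < eps ->
  exists del, 0 < del /\ forall t, Rabs (t - x) < del -> Rabs (f t - f x) < eps.
Proof.
  intros H eps He.
  assert (C : continuity_pt f x) by (apply derivable_continuous_pt; exists l; exact H).
  destruct (C eps He) as [del [Hd Hc]].
  exists del; split; auto. intros t Ht.
  destruct (Req_dec t x) as [->|Hne].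
  - rewrite Rminus_diag, Rabs_R0; lra.
  - apply (Hc t). split.
    + split; [exact I| auto].
    + exact Ht.
Qed.

Lemma mvt f f' a b : (forall x, derivable_pt_lim f x (f' x)) -> a < b ->
  exists c, a < c < b /\ f b - f a = f' c * (b - a).
Proof.
  intros H Hab.
  set (pr := fun x => exist (fun l => derivable_pt_lim f x l) (f' x) (H x) : derivable_pt f x).
  destruct (MVT_cor1 f a b pr Hab) as [c [Hc1 Hc2]].
  exists c; split; auto.
Qed.

Lemma dext f g x l l' : (forall t, f t = g t) -> derivable_pt_lim f x l -> l = l' ->
  derivable_pt_lim g x l'.
Proof.
  intros He H <-. intros eps Heps. destruct (H eps Heps) as [d Hd].
  exists d. intros h Hh0 Hh. rewrite <- !He. apply Hd; auto.
Qed.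

Lemma cross f f' a b al be : (forall x, derivable_pt_lim f x (f' x)) -> a < b ->
  f a < al -> al < f b -> al < be -> exists t, al < f t < be /\ 0 < f' t.
Proof.
  intros H Hab Ha Hb Hbe.
  set (E := fun t => a <= t <= b /\ f t <= al).
  assert (HB : bound E) by (exists b; intros t [[? ?] ?]; auto).
  assert (HE : exists t, E t) by (exists a; unfold E; split; lra).
  destruct (completeness E HB HE) as [s [Hub Hlub]].
  assert (Has : a <= s) by (apply Hub; unfold E; split; lra).
  assert (Hsb : s <= b) by (apply Hlub; intros t [[? ?] ?]; auto).
  assert (Hfs : f s <= al).
  { destruct (Rle_lt_dec (f s) al) as [h|h]; auto. exfalso.
    destruct (cont_of_der f s (f' s) (H s) (f s - al)) as [d [Hd Hc]]; [lra|].
    assert (s <= s - d/2).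
    { apply Hlub. intros t [[Ht1 Ht2] Ht3].
      destruct (Rle_lt_dec t (s - d/2)) as [h'|h']; auto. exfalso.
      assert (t <= s) by (apply Hub; split; [split|]; auto).
      assert (Rabs (t - s) < d) by (rewrite Rabs_left1; lra).
      specialize (Hc t H1). apply Rabs_def2 in Hc. lra. }
    lra. }
  assert (Hsb' : s < b) by (destruct (Req_dec s b); [subst; lra | lra]).
  assert (Hgt : forall t, s < t <= b -> al < f t).
  { intros t [h1 h2]. destruct (Rle_lt_dec (f t) al) as [h|h]; auto. exfalso.
    assert (t <= s) by (apply Hub; split;[split|]; lra). lra. }
  destruct (cont_of_der f s (f' s) (H s) (be - al)) as [d [Hd Hc]]; [lra|].
  set (r := s + Rmin d (b - s) / 2).
  assert (Hm1 : Rmin d (b - s) <= d) by apply Rmin_l.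
  assert (Hm2 : Rmin d (b - s) <= b - s) by apply Rmin_r.
  assert (Hm3 : 0 < Rmin d (b - s)) by (apply Rmin_pos; lra).
  assert (Hr1 : s < r) by (unfold r; lra).
  destruct (mvt f f' s r H Hr1) as [c [[Hc1 Hc2] Heq]].
  exists c. split; [split|].
  - apply Hgt; unfold r in *; lra.
  - assert (Rabs (c - s) < d) by (rewrite Rabs_right; unfold r in *; lra).
    specialize (Hc c H0). apply Rabs_def2 in Hc. lra.
  - assert (al < f r) by (apply Hgt; unfold r; lra).
    destruct (Rle_lt_dec (f' c) 0) as [h|h]; auto.
    exfalso. assert (f' c * (r - s) <= 0).
    { nra. } lra.
Qed.

Lemma phi_nn EA uig u : 0 <= phi EA uig u.
Proof. unfold phi. destruct (Rle_dec u uig); [lra | left; apply exp_pos]. Qed.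

Theorem proposition2p3
  (q k D EA uig um up : R) (u z y : R -> R)
  (hq : 0 < q) (hk : 0 < k) (hD : 0 < D) (hEA : 0 < EA)
  (hu' : forall xi : R, derivable_pt_lim u xi
     ((/2 * (u xi)^2 - /2 * um^2) - (u xi - um) - q * (z xi + D * y xi)))
  (hz' : forall xi : R, derivable_pt_lim z xi (y xi))
  (hy' : forall xi : R, derivable_pt_lim y xi
     (/ D * (- y xi + k * phi EA uig (u xi) * z xi)))
  (hznn : forall xi : R, 0 <= z xi)
  (hlu_m : lim_minf u um) (hlz_m : lim_minf z 0) (hly_m : lim_minf y 0)
  (hlu_p : lim_pinf u up) (hlz_p : lim_pinf z 1) (hly_p : lim_pinf y 0)
  (hRH : /2 * (up^2 - um^2) = up - um + q)
  (hord : up < uig < um)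
  (hweak : up < 1 /\ um < 1) :
  (forall xi : R, u xi <= um) /\
  (forall a b : R, a <= b -> u b <= u a).
Proof.
  set (w := fun t => z t + D * y t).
  set (v := fun t => (/2 * (u t)^2 - /2 * um^2) - (u t - um) - q * w t).
  assert (Hu : forall x, derivable_pt_lim u x (v x)) by exact hu'.
  assert (Hw : forall x, derivable_pt_lim w x (k * phi EA uig (u x) * z x)).
  { intros x. eapply dext with (f := (z + mult_real_fct D y)%F).
    - intros t; reflexivity.
    - apply derivable_pt_lim_plus; [apply hz'| apply derivable_pt_lim_scal; apply hy'].
    - field. lra. }
  assert (Hwm : forall a b, a <= b -> w a <= w b).
  { intros a b Hab. destruct (Req_dec a b) as [->|Hne]; [lra|].
    destruct (mvt w _ a b Hw) as [c [Hc Heq]]; [lra|].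
    assert (0 <= k * phi EA uig (u c) * z c).
    { apply Rmult_le_pos; [apply Rmult_le_pos; [lra|apply phi_nn]| apply hznn]. }
    assert (0 <= k * phi EA uig (u c) * z c * (b - a)) by (apply Rmult_le_pos; lra).
    lra. }
  assert (Hw0 : forall x, 0 <= w x).
  { intros x. apply Rnot_lt_le. intros Hlt.
    destruct (hlz_m (- w x / (2 * (1 + D))) ) as [M1 HM1].
    { apply Rdiv_lt_0_compat; lra. }
    destruct (hly_m (- w x / (2 * (1 + D))) ) as [M2 HM2].
    { apply Rdiv_lt_0_compat; lra. }
    set (x0 := Rmin x (Rmin M1 M2)).
    assert (x0 <= x) by apply Rmin_l.
    assert (x0 <= M1) by (unfold x0; rewrite Rmin_assoc, (Rmin_comm x M1), <- Rmin_assoc; apply Rmin_l).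
    assert (x0 <= M2) by (unfold x0; rewrite (Rmin_comm M1 M2), Rmin_assoc, (Rmin_comm x M2), <- Rmin_assoc; apply Rmin_l).
    specialize (HM1 x0 H0). specialize (HM2 x0 H1).
    rewrite Rminus_0_r in HM1, HM2.
    apply Rabs_def2 in HM1. apply Rabs_def2 in HM2.
    specialize (Hwm x0 x H).
    assert (- w x / (2 * (1 + D)) * (2 * (1 + D)) = - w x) by (field; lra).
    unfold w in *. nra. }
  assert (Hg : forall t, um < u t < 2 - um -> v t < 0).
  { intros t Ht. unfold v. specialize (Hw0 t).
    assert ((u t - um) * ((u t + um)/2 - 1) < 0).
    { apply Rmult_pos_neg; lra. }
    assert (0 <= q * w t) by (apply Rmult_le_pos; lra).
    replace (/ 2 * u t ^ 2 - / 2 * um ^ 2 - (u t - um)) with ((u t - um) * ((u t + um)/2 - 1)) by field.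
    lra. }
  assert (Part1 : forall xi, u xi <= um).
  { intros x0. apply Rnot_lt_le. intros Hlt.
    set (be := Rmin (u x0) (2 - um)).
    assert (be <= u x0) by apply Rmin_l.
    assert (be <= 2 - um) by apply Rmin_r.
    assert (um < be) by (apply Rmin_glb_lt; lra).
    set (al := (um + be) / 2).
    destruct (hlu_m (al - um)) as [M HM]; [unfold al; lra|].
    set (a := Rmin M (x0 - 1)).
    assert (a <= M) by apply Rmin_l.
    assert (a <= x0 - 1) by apply Rmin_r.
    specialize (HM a H2). apply Rabs_def2 in HM.
    destruct (cross u v a x0 al be Hu) as [t [Ht Hv]]; try (unfold al in *; lra).
    assert (v t < 0) by (apply Hg; unfold al in *; lra). lra. }
  assert (Hv' : forall x, derivable_pt_lim v x ((u x - 1) * v x - q * (k * phi EA uig (u x) * z x))).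
  { intros x. eapply dext with
      (f := (mult_real_fct (/2) (u * u) - fct_cte (/2 * um^2) - (u - fct_cte um)
             - mult_real_fct q w)%F).
    - intros t. unfold v, mult_real_fct, fct_cte, minus_fct, mult_fct. simpl. ring.
    - repeat first [ apply derivable_pt_lim_minus | apply derivable_pt_lim_scal
                   | apply derivable_pt_lim_mult | apply derivable_pt_lim_const
                   | apply Hu | apply Hw ].
    - simpl. set (V := v x). set (U := u x). set (P := phi EA uig U). nra. }
  assert (Hvn : forall x, v x <= 0).
  { intros x0. apply Rnot_lt_le. intros Hpos.
    set (c := v x0 / 2).
    destruct (classic (exists a, a < x0 /\ v a < c)) as [[a [Ha1 Ha2]]|Hno].
    - destruct (cross v _ a x0 c (v x0) Hv') as [t [Ht Hd]]; try (unfold c in *; lra).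
      assert (u t <= um) by apply Part1.
      assert (0 < v t) by (unfold c in *; lra).
      assert (0 <= q * (k * phi EA uig (u t) * z t)).
      { apply Rmult_le_pos; [lra|]. apply Rmult_le_pos; [apply Rmult_le_pos; [lra|apply phi_nn]| apply hznn]. }
      assert ((u t - 1) * v t < 0) by (apply Rmult_neg_pos; lra).
      lra.
    - assert (Hge : forall a, a < x0 -> c <= v a).
      { intros a Ha. apply Rnot_lt_le. intros Hl. apply Hno. exists a; auto. }
      destruct (hlu_m 1) as [M HM]; [lra|].
      set (x1 := Rmin M (x0 - 1)).
      assert (x1 <= M) by apply Rmin_l.
      assert (x1 <= x0 - 1) by apply Rmin_r.
      assert (Hc : 0 < c) by (unfold c; lra).
      set (x2 := x1 - 2 / c).
      assert (0 < 2 / c) by (apply Rdiv_lt_0_compat; lra).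
      destruct (mvt u v x2 x1 Hu) as [c' [Hc' Heq]]; [unfold x2; lra|].
      assert (c <= v c') by (apply Hge; lra).
      assert (c * (x1 - x2) <= v c' * (x1 - x2)) by (apply Rmult_le_compat_r; unfold x2; lra).
      assert (c * (x1 - x2) = 2) by (unfold x2; field; lra).
      pose proof (HM x1 H) as A1. pose proof (HM x2 ltac:(unfold x2; lra)) as A2.
      apply Rabs_def2 in A1. apply Rabs_def2 in A2. lra. }
  split; [exact Part1|].
  intros a b Hab. destruct (Req_dec a b) as [->|Hne]; [lra|].
  destruct (mvt u v a b Hu) as [c [Hc Heq]]; [lra|].
  assert (v c * (b - a) <= 0) by (pose proof (Hvn c); nra).
  lra.
Qed.
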